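(* Let $X$ be an infinite dimensional Banach space. Then $$c_0(X) - \bigcup_{p>0}\ell_p^w(X)$$ is maximal spaceable in $c_0(X)$, i.e. $\big(c_0(X)\setminus \bigcup_{p>0}\ell_p^w(X)\big)\cup\{0\}$ contains a closed linear subspace of $c_0(X)$ of dimension $\dim c_0(X)$.
   Context: $\mathbb{K}=\mathbb{R}$ or $\mathbb{C}$. $c_0(X)$ is the Banach space of $X$-valued sequences converging in norm to $0$, with the sup norm. For $0<p<\infty$, $\ell_p^w(X)$ is the space of weakly $p$-summable $X$-valued sequences, i.e. sequences $(x_n)$ with $(\varphi(x_n))_n\in\ell_p$ for every $\varphi\in X'$ (the topological dual). For sets $A,B$ of $X$-valued sequences, $A-B:=A\setminus B$. A subset $A$ of a topological vector space $V$ is maximal spaceable if $A\cup\{0\}$ contains a closed linear subspace of $V$ of dimension $\dim V$. *)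

(* Defs.v *)
From Stdlib Require Import Reals List.
Open Scope R_scope.

Inductive field_kind := RealField | ComplexField.

Record cplx := Cplx { re : R; im : R }.
Definition cadd (z w : cplx) := Cplx (re z + re w) (im z + im w).
Definition cmul (z w : cplx) :=
  Cplx (re z * re w - im z * im w) (re z * im w + im z * re w).
Definition copp (z : cplx) := Cplx (- re z) (- im z).
Definition cabs (z : cplx) := sqrt (re z * re z + im z * im z).

Definition scal (k : field_kind) : Type :=
  match k with RealField => R | ComplexField => cplx end.

Definition kzero (k : field_kind) : scal k :=
  match k return scal k with RealField => 0 | ComplexField => Cplx 0 0 end.
Definition kone (k : field_kind) : scal k :=
  match k return scal k with RealField => 1 | ComplexField => Cplx 1 0 end.
Definition kadd (k : field_kind) : scal k -> scal k -> scal k :=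
  match k return scal k -> scal k -> scal k with
  | RealField => Rplus | ComplexField => cadd end.
Definition kmul (k : field_kind) : scal k -> scal k -> scal k :=
  match k return scal k -> scal k -> scal k with
  | RealField => Rmult | ComplexField => cmul end.
Definition kopp (k : field_kind) : scal k -> scal k :=
  match k return scal k -> scal k with
  | RealField => Ropp | ComplexField => copp end.
Definition kabs (k : field_kind) : scal k -> R :=
  match k return scal k -> R with
  | RealField => Rabs | ComplexField => cabs end.

Record NormedSpace (k : field_kind) := {
  carrier :> Type;
  vzero : carrier;
  vadd : carrier -> carrier -> carrier;
  vopp : carrier -> carrier;
  vscal : scal k -> carrier -> carrier;
  vnorm : carrier -> R }.
Arguments vzero {k} n.
Arguments vadd {k n}.
Arguments vopp {k n}.
Arguments vscal {k n}.
Arguments vnorm {k n}.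

Definition is_vector_space {k} (X : NormedSpace k) : Prop :=
  (forall x y z : X, vadd x (vadd y z) = vadd (vadd x y) z) /\
  (forall x y : X, vadd x y = vadd y x) /\
  (forall x : X, vadd x (vzero X) = x) /\
  (forall x : X, vadd x (vopp x) = vzero X) /\
  (forall (a b : scal k) (x : X), vscal a (vscal b x) = vscal (kmul k a b) x) /\
  (forall x : X, vscal (kone k) x = x) /\
  (forall (a : scal k) (x y : X), vscal a (vadd x y) = vadd (vscal a x) (vscal a y)) /\
  (forall (a b : scal k) (x : X), vscal (kadd k a b) x = vadd (vscal a x) (vscal b x)).

Definition is_norm {k} (X : NormedSpace k) : Prop :=
  (forall x : X, vnorm x = 0 -> x = vzero X) /\
  (forall (a : scal k) (x : X), vnorm (vscal a x) = kabs k a * vnorm x) /\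
  (forall x y : X, vnorm (vadd x y) <= vnorm x + vnorm y).

Definition is_complete {k} (X : NormedSpace k) : Prop :=
  forall u : nat -> X,
    (forall eps, eps > 0 -> exists N, forall m n, (N <= m)%nat -> (N <= n)%nat ->
       vnorm (vadd (u m) (vopp (u n))) < eps) ->
    exists l : X, forall eps, eps > 0 -> exists N, forall n, (N <= n)%nat ->
       vnorm (vadd (u n) (vopp l)) < eps.

Definition is_banach {k} (X : NormedSpace k) : Prop :=
  is_vector_space X /\ is_norm X /\ is_complete X.

Definition lincomb {k} {V : Type} (zero : V) (add : V -> V -> V)
  (sc : scal k -> V -> V) (l : list (scal k * V)) : V :=
  fold_right (fun p acc => add (sc (fst p) (snd p)) acc) zero l.

Definition in_span {k} {V : Type} (zero : V) (add : V -> V -> V)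
  (sc : scal k -> V -> V) (B : V -> Prop) (x : V) : Prop :=
  exists l : list (scal k * V),
    Forall (fun p => B (snd p)) l /\ x = lincomb zero add sc l.

Definition lin_indep {k} {V : Type} (zero : V) (add : V -> V -> V)
  (sc : scal k -> V -> V) (B : V -> Prop) : Prop :=
  forall l : list (scal k * V),
    NoDup (map snd l) -> Forall (fun p => B (snd p)) l ->
    lincomb zero add sc l = zero -> Forall (fun p => fst p = kzero k) l.

Definition is_hamel_basis {k} {V : Type} (zero : V) (add : V -> V -> V)
  (sc : scal k -> V -> V) (W B : V -> Prop) : Prop :=
  (forall x, B x -> W x) /\ lin_indep zero add sc B /\
  (forall x, W x -> in_span zero add sc B x).

Definition same_dim {k} {V : Type} (zero : V) (add : V -> V -> V)
  (sc : scal k -> V -> V) (W1 W2 : V -> Prop) : Prop :=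
  exists B1 B2 : V -> Prop,
    is_hamel_basis zero add sc W1 B1 /\ is_hamel_basis zero add sc W2 B2 /\
    exists f : {x | B1 x} -> {y | B2 y},
      (forall a b, f a = f b -> a = b) /\ (forall c, exists a, f a = c).

Definition infinite_dimensional {k} (X : NormedSpace k) : Prop :=
  ~ exists l : list X,
      forall x : X, in_span (vzero X) vadd vscal (fun y => In y l) x.

Definition seq_zero {k} (X : NormedSpace k) : nat -> X := fun _ => vzero X.
Definition seq_add {k} {X : NormedSpace k} (u v : nat -> X) : nat -> X :=
  fun n => vadd (u n) (v n).
Definition seq_scal {k} {X : NormedSpace k} (a : scal k) (u : nat -> X) : nat -> X :=
  fun n => vscal a (u n).

Definition in_c0 {k} (X : NormedSpace k) (u : nat -> X) : Prop :=
  forall eps, eps > 0 -> exists N, forall n, (N <= n)%nat -> vnorm (u n) < eps.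

Definition sup_cv {k} {X : NormedSpace k} (w : nat -> nat -> X) (u : nat -> X) : Prop :=
  forall eps, eps > 0 -> exists N, forall n, (N <= n)%nat ->
    forall j, vnorm (vadd (w n j) (vopp (u j))) <= eps.

(** [W] is a closed linear subspace of c_0(X) (sup-norm topology, which is
    metrizable, so closed = sequentially closed). *)
Definition closed_subspace_c0 {k} (X : NormedSpace k) (W : (nat -> X) -> Prop) : Prop :=
  (forall u, W u -> in_c0 X u) /\
  W (seq_zero X) /\
  (forall u v, W u -> W v -> W (seq_add u v)) /\
  (forall a u, W u -> W (seq_scal a u)) /\
  (forall w u, (forall n, W (w n)) -> in_c0 X u -> sup_cv w u -> W u).

Definition continuous_linear_functional {k} (X : NormedSpace k) (phi : X -> scal k) : Prop :=
  (forall x y : X, phi (vadd x y) = kadd k (phi x) (phi y)) /\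
  (forall (a : scal k) (x : X), phi (vscal a x) = kmul k a (phi x)) /\
  (forall (x : X) eps, eps > 0 -> exists delta, delta > 0 /\
     forall y : X, vnorm (vadd y (vopp x)) < delta ->
       kabs k (kadd k (phi y) (kopp k (phi x))) < eps).

(** a^p for a >= 0 and real p > 0 (with 0^p = 0). *)
Definition rpow (a p : R) : R := if Rle_dec a 0 then 0 else Rpower a p.

Definition in_lp {k} (p : R) (a : nat -> scal k) : Prop :=
  exists l, Un_cv (fun n => sum_f_R0 (fun i => rpow (kabs k (a i)) p) n) l.

Definition weakly_p_summable {k} (X : NormedSpace k) (p : R) (u : nat -> X) : Prop :=
  forall phi : X -> scal k, continuous_linear_functional X phi ->
    in_lp p (fun n => phi (u n)).

Definition c0_minus_weak {k} (X : NormedSpace k) (u : nat -> X) : Prop :=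
  in_c0 X u /\ ~ (exists p, p > 0 /\ weakly_p_summable X p u).

Definition maximal_spaceable_c0 {k} (X : NormedSpace k) (A : (nat -> X) -> Prop) : Prop :=
  exists W : (nat -> X) -> Prop,
    closed_subspace_c0 X W /\
    (forall u, W u -> A u \/ u = seq_zero X) /\
    same_dim (seq_zero X) seq_add seq_scal W (in_c0 X).

(* Main.v *)
Require Import Defs.
From Stdlib Require Import Reals List Lra Lia Psatz Cantor.
From Stdlib Require Import Classical ClassicalEpsilon FunctionalExtensionality ProofIrrelevance.
From mathcomp Require classical_sets.
Open Scope R_scope.

(** * Scalars *)
Definition kr (k : field_kind) (t : R) : scal k :=
  match k return scal k with RealField => t | ComplexField => Cplx t 0 end.

Lemma cplx_eq a b c d : a = c -> b = d -> Cplx a b = Cplx c d.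
Proof. intros -> ->; reflexivity. Qed.

Ltac kdes k := destruct k; simpl in *.

Lemma kmul_comm k (a b : scal k) : kmul k a b = kmul k b a.
Proof. kdes k. ring. destruct a, b; unfold cmul; simpl; apply cplx_eq; ring. Qed.
Lemma kmul_assoc k (a b c : scal k) : kmul k a (kmul k b c) = kmul k (kmul k a b) c.
Proof. kdes k. ring. destruct a, b, c; unfold cmul; simpl; apply cplx_eq; ring. Qed.
Lemma kadd_comm k (a b : scal k) : kadd k a b = kadd k b a.
Proof. kdes k. ring. destruct a, b; unfold cadd; simpl; apply cplx_eq; ring. Qed.
Lemma kadd_assoc k (a b c : scal k) : kadd k a (kadd k b c) = kadd k (kadd k a b) c.
Proof. kdes k. ring. destruct a, b, c; unfold cadd; simpl; apply cplx_eq; ring. Qed.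
Lemma kmul_addr k (a b c : scal k) : kmul k a (kadd k b c) = kadd k (kmul k a b) (kmul k a c).
Proof. kdes k. ring. destruct a, b, c; unfold cmul, cadd; simpl; apply cplx_eq; ring. Qed.
Lemma kmul_0l k (a : scal k) : kmul k (kzero k) a = kzero k.
Proof. kdes k. ring. destruct a; unfold cmul; simpl; apply cplx_eq; ring. Qed.
Lemma kmul_1l k (a : scal k) : kmul k (kone k) a = a.
Proof. kdes k. ring. destruct a; unfold cmul; simpl; apply cplx_eq; ring. Qed.
Lemma kadd_0l k (a : scal k) : kadd k (kzero k) a = a.
Proof. kdes k. ring. destruct a; unfold cadd; simpl; apply cplx_eq; ring. Qed.
Lemma kadd_00 k : kadd k (kzero k) (kzero k) = kzero k.
Proof. apply kadd_0l. Qed.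
Lemma kadd_opp k (a : scal k) : kadd k a (kopp k a) = kzero k.
Proof. kdes k. ring. destruct a; unfold cadd, copp; simpl; apply cplx_eq; ring. Qed.
Lemma kr_mul k a b : kmul k (kr k a) (kr k b) = kr k (a * b).
Proof. kdes k. ring. unfold cmul; simpl; apply cplx_eq; ring. Qed.
Lemma kr_add k a b : kadd k (kr k a) (kr k b) = kr k (a + b).
Proof. kdes k. ring. unfold cadd; simpl; apply cplx_eq; ring. Qed.
Lemma kr_one k : kr k 1 = kone k.
Proof. kdes k; reflexivity. Qed.
Lemma kr_zero k : kr k 0 = kzero k.
Proof. kdes k; reflexivity. Qed.
Lemma kr_opp1 k : kr k (-1) = kopp k (kone k).
Proof. kdes k. reflexivity. unfold copp; simpl; apply cplx_eq; ring. Qed.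

Lemma cabs_re a b : Rabs a <= cabs (Cplx a b).
Proof.
  unfold cabs; simpl. rewrite <- sqrt_Rsqr_abs. apply sqrt_le_1_alt.
  unfold Rsqr. nra.
Qed.

Lemma kabs_nonneg k (a : scal k) : 0 <= kabs k a.
Proof. kdes k. apply Rabs_pos. unfold cabs. apply sqrt_pos. Qed.

Lemma kabs_kr k t : kabs k (kr k t) = Rabs t.
Proof.
  kdes k. reflexivity. unfold cabs; simpl.
  replace (t * t + 0 * 0) with (Rsqr t) by (unfold Rsqr; ring).
  apply sqrt_Rsqr_abs.
Qed.

Lemma kabs_mul k (a b : scal k) : kabs k (kmul k a b) = kabs k a * kabs k b.
Proof.
  kdes k. apply Rabs_mult. destruct a as [a1 a2], b as [b1 b2]; unfold cabs, cmul; simpl.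
  rewrite <- sqrt_mult_alt by nra. f_equal. ring.
Qed.

Lemma kabs_one k : kabs k (kone k) = 1.
Proof. rewrite <- kr_one, kabs_kr. apply Rabs_R1. Qed.
Lemma kabs_zero k : kabs k (kzero k) = 0.
Proof. rewrite <- kr_zero, kabs_kr. apply Rabs_R0. Qed.
Lemma kabs_opp1 k : kabs k (kopp k (kone k)) = 1.
Proof. rewrite <- kr_opp1, kabs_kr. unfold Rabs; destruct Rcase_abs; lra. Qed.

Lemma kinv k (a : scal k) : a <> kzero k -> exists b, kmul k b a = kone k.
Proof.
  kdes k; intros H.
  - exists (/ a). field. exact H.
  - destruct a as [p q]. assert (Hn : p * p + q * q <> 0).
    { intro E. apply H. assert (p = 0) by nra. assert (q = 0) by nra. subst; reflexivity. }
    exists (Cplx (p / (p*p+q*q)) (- q / (p*p+q*q))). unfold cmul; simpl.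
    apply cplx_eq; field; exact Hn.
Qed.
Lemma kadd_0r k (a : scal k) : kadd k a (kzero k) = a.
Proof. rewrite kadd_comm. apply kadd_0l. Qed.

Section Vec.
Variable k : field_kind.
Variable X : NormedSpace k.
Hypothesis HV : is_vector_space X.

Lemma vA (x y z : X) : vadd x (vadd y z) = vadd (vadd x y) z.
Proof. apply HV. Qed.
Lemma vC (x y : X) : vadd x y = vadd y x.
Proof. apply HV. Qed.
Lemma v0r (x : X) : vadd x (vzero X) = x.
Proof. apply HV. Qed.
Lemma vNr (x : X) : vadd x (vopp x) = vzero X.
Proof. apply HV. Qed.
Lemma vsM a b (x : X) : vscal a (vscal b x) = vscal (kmul k a b) x.
Proof. apply HV. Qed.
Lemma vs1 (x : X) : vscal (kone k) x = x.
Proof. apply HV. Qed.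
Lemma vsDr a (x y : X) : vscal a (vadd x y) = vadd (vscal a x) (vscal a y).
Proof. apply HV. Qed.
Lemma vsDl a b (x : X) : vscal (kadd k a b) x = vadd (vscal a x) (vscal b x).
Proof. apply HV. Qed.

Lemma v0l (x : X) : vadd (vzero X) x = x.
Proof. rewrite vC; apply v0r. Qed.
Lemma vNl (x : X) : vadd (vopp x) x = vzero X.
Proof. rewrite vC; apply vNr. Qed.

Lemma vcancel (x y z : X) : vadd x y = vadd x z -> y = z.
Proof.
  intro H. rewrite <- (v0l y), <- (v0l z), <- (vNl x), <- !vA, H. reflexivity.
Qed.

Lemma vs0 (x : X) : vscal (kzero k) x = vzero X.
Proof.
  apply (vcancel (vscal (kzero k) x)). rewrite v0r, <- vsDl, kadd_00. reflexivity.
Qed.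
Lemma vsv0 a : vscal a (vzero X) = vzero X.
Proof.
  apply (vcancel (vscal a (vzero X))). rewrite v0r, <- vsDr, v0r. reflexivity.
Qed.

Lemma vopp_unique (x y : X) : vadd x y = vzero X -> y = vopp x.
Proof. intro H. apply (vcancel x). rewrite H, vNr. reflexivity. Qed.

Lemma vopp_scal (x : X) : vopp x = vscal (kopp k (kone k)) x.
Proof.
  symmetry. apply vopp_unique. rewrite <- (vs1 x) at 1. rewrite <- vsDl, kadd_opp. apply vs0.
Qed.

Lemma vopp_add (x y : X) : vopp (vadd x y) = vadd (vopp x) (vopp y).
Proof. rewrite !vopp_scal. apply vsDr. Qed.

Lemma vopp_opp (x : X) : vopp (vopp x) = x.
Proof. symmetry. apply vopp_unique. apply vNl. Qed.

Lemma vopp0 : vopp (vzero X) = vzero X.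
Proof. rewrite vopp_scal. apply vsv0. Qed.

Lemma vscal_opp a (x : X) : vscal a (vopp x) = vopp (vscal a x).
Proof. rewrite !vopp_scal, !vsM, kmul_comm. reflexivity. Qed.

Lemma vACA (a b c d : X) : vadd (vadd a b) (vadd c d) = vadd (vadd a c) (vadd b d).
Proof.
  rewrite <- !vA. f_equal. rewrite !vA. f_equal. apply vC.
Qed.

Lemma vsub_add (x y : X) : vadd (vadd x (vopp y)) y = x.
Proof. rewrite <- vA, vNl, v0r. reflexivity. Qed.

Lemma vsub_eq0 (x y : X) : vadd x (vopp y) = vzero X -> x = y.
Proof. intro H. rewrite <- (vsub_add x y), H, v0l. reflexivity. Qed.

Lemma vsub_scal a (x y : X) : vscal a (vadd x (vopp y)) = vadd (vscal a x) (vopp (vscal a y)).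
Proof. rewrite vsDr, vscal_opp. reflexivity. Qed.

Lemma vsub_tri (x y z : X) : vadd x (vopp z) = vadd (vadd x (vopp y)) (vadd y (vopp z)).
Proof. rewrite <- vA, (vA (vopp y)), vNl, v0l. reflexivity. Qed.

Lemma vsub_addadd (a b c d : X) :
  vadd (vadd a b) (vopp (vadd c d)) = vadd (vadd a (vopp c)) (vadd b (vopp d)).
Proof. rewrite vopp_add. apply vACA. Qed.

Hypothesis HN : is_norm X.

Lemma nZ a (x : X) : vnorm (vscal a x) = kabs k a * vnorm x.
Proof. apply HN. Qed.
Lemma nT (x y : X) : vnorm (vadd x y) <= vnorm x + vnorm y.
Proof. apply HN. Qed.
Lemma n0eq (x : X) : vnorm x = 0 -> x = vzero X.
Proof. apply HN. Qed.

Lemma nzero : vnorm (vzero X) = 0.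
Proof. rewrite <- (vs0 (vzero X)), nZ, kabs_zero. ring. Qed.
Lemma nopp (x : X) : vnorm (vopp x) = vnorm x.
Proof. rewrite vopp_scal, nZ, kabs_opp1. ring. Qed.
Lemma npos (x : X) : 0 <= vnorm x.
Proof.
  pose proof (nT x (vopp x)). rewrite vNr, nzero, nopp in H. lra.
Qed.
Lemma nsub_sym (x y : X) : vnorm (vadd x (vopp y)) = vnorm (vadd y (vopp x)).
Proof.
  rewrite <- nopp, vopp_add, vopp_opp, vC. reflexivity.
Qed.
Lemma nsub_tri (x y z : X) :
  vnorm (vadd x (vopp z)) <= vnorm (vadd x (vopp y)) + vnorm (vadd y (vopp z)).
Proof. rewrite (vsub_tri x y z). apply nT. Qed.

Lemma n_small_eq (x y : X) : (forall eps, eps > 0 -> vnorm (vadd x (vopp y)) <= eps) -> x = y.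
Proof.
  intro H. apply vsub_eq0, n0eq. pose proof (npos (vadd x (vopp y))).
  destruct (Req_dec (vnorm (vadd x (vopp y))) 0) as [E|E]; auto.
  specialize (H (vnorm (vadd x (vopp y)) / 2)). assert (vnorm (vadd x (vopp y)) / 2 > 0) by lra.
  specialize (H H1). lra.
Qed.

Lemma n_pos_of_neq (x : X) : x <> vzero X -> vnorm x > 0.
Proof.
  intro H. pose proof (npos x). destruct (Req_dec (vnorm x) 0) as [E|E].
  - exfalso; apply H, n0eq, E.
  - lra.
Qed.

End Vec.

Lemma zorn_sets (T : Type) (P : (T -> Prop) -> Prop) :
  (forall F : (T -> Prop) -> Prop, (forall A, F A -> P A) ->
     (forall A B, F A -> F B -> (forall x, A x -> B x) \/ (forall x, B x -> A x)) ->
     P (fun x => exists2 A, F A & A x)) ->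
  exists A, P A /\ forall B, (forall x, A x -> B x) -> P B -> forall x, B x -> A x.
Proof.
  intro H. destruct (@classical_sets.Zorn_bigcup T P) as [A [PA HA]].
  - intros F HF Ht. apply H; auto.
  - exists A; split; auto. intros B AB PB.
    apply NNPP; intro NB. apply (HA B); auto. split; auto.
Qed.

Section HB.
Variable k : field_kind.
Variable X : NormedSpace k.
Hypothesis HV : is_vector_space X.
Hypothesis HN : is_norm X.

Definition rs (t : R) (x : X) : X := vscal (kr k t) x.

Lemma rs_addl a b x : rs (a + b) x = vadd (rs a x) (rs b x).
Proof. unfold rs. rewrite <- kr_add. apply vsDl; auto. Qed.
Lemma rs_addr a x y : rs a (vadd x y) = vadd (rs a x) (rs a y).
Proof. unfold rs. apply vsDr; auto. Qed.
Lemma rs_mul a b x : rs a (rs b x) = rs (a * b) x.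
Proof. unfold rs. rewrite vsM, kr_mul; auto. Qed.
Lemma rs_1 x : rs 1 x = x.
Proof. unfold rs. rewrite kr_one. apply vs1; auto. Qed.
Lemma rs_0 x : rs 0 x = vzero X.
Proof. unfold rs. rewrite kr_zero. apply vs0; auto. Qed.
Lemma rs_v0 a : rs a (vzero X) = vzero X.
Proof. unfold rs. apply vsv0; auto. Qed.
Lemma rs_norm a x : vnorm (rs a x) = Rabs a * vnorm x.
Proof. unfold rs. rewrite nZ, kabs_kr; auto. Qed.
Lemma rs_m1 x : rs (-1) x = vopp x.
Proof. unfold rs. rewrite kr_opp1, vopp_scal; auto. Qed.
Lemma rs_opp a x : rs (- a) x = vopp (rs a x).
Proof. rewrite <- rs_m1, rs_mul. f_equal. ring. Qed.

Lemma rs_vopp a x : rs a (vopp x) = vopp (rs a x).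
Proof. unfold rs. apply vscal_opp; auto. Qed.

Definition valid (G : X * R -> Prop) : Prop :=
  (forall y a b, G (y, a) -> G (y, b) -> a = b) /\
  (forall y a z b, G (y, a) -> G (z, b) -> G (vadd y z, a + b)) /\
  (forall y a t, G (y, a) -> G (rs t y, t * a)) /\
  (forall y a, G (y, a) -> a <= vnorm y) /\
  G (vzero X, 0).

Lemma valid_ext G H : (forall p, G p <-> H p) -> valid G -> valid H.
Proof.
  intros E [h1 [h2 [h3 [h4 h5]]]]. repeat split.
  - intros y a b Ha Hb. apply E in Ha, Hb. eauto.
  - intros y a z b Ha Hb. apply E. apply E in Ha, Hb. eauto.
  - intros y a t Ha. apply E. apply E in Ha. eauto.
  - intros y a Ha. apply E in Ha. eauto.
  - apply E; auto.
Qed.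

Variable x0 : X.
Hypothesis Hx0 : x0 <> vzero X.

Definition G0 (p : X * R) : Prop := exists t, p = (rs t x0, t * vnorm x0).

Lemma valid_G0 : valid G0.
Proof.
  pose proof (n_pos_of_neq _ X HV HN x0 Hx0) as Hp.
  repeat split.
  - intros y a b [t Ht] [s Hs]. injection Ht as Ht1 Ht2. injection Hs as Hs1 Hs2.
    subst. assert (E : rs (t - s) x0 = vzero X).
    { unfold Rminus. rewrite rs_addl, rs_opp, Hs1. apply vNr; auto. }
    assert (Hn := rs_norm (t - s) x0). rewrite E, nzero in Hn; auto.
    assert (HR : Rabs (t - s) = 0) by (apply (Rmult_eq_reg_r (vnorm x0)); lra).
    destruct (Req_dec (t - s) 0) as [Z|Z]; [|pose proof (Rabs_pos_lt _ Z); lra]. assert (t = s) by lra. subst; reflexivity.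
  - intros y a z b [t Ht] [s Hs]. injection Ht as -> ->. injection Hs as -> ->.
    exists (t + s). rewrite rs_addl. f_equal; ring.
  - intros y a u [t Ht]. injection Ht as -> ->. exists (u * t). rewrite rs_mul. f_equal; ring.
  - intros y a [t Ht]. injection Ht as -> ->. rewrite rs_norm.
    pose proof (Rle_abs t). nra.
  - exists 0. rewrite rs_0. f_equal; ring.
Qed.

Definition PZ (G : X * R -> Prop) : Prop := valid (fun p => G p \/ G0 p).

Lemma PZ_chain : forall F : (X * R -> Prop) -> Prop, (forall A, F A -> PZ A) ->
     (forall A B, F A -> F B -> (forall x, A x -> B x) \/ (forall x, B x -> A x)) ->
     PZ (fun x => exists2 A, F A & A x).
Proof.
  intros F HF Ht.
  set (U := fun p => (exists2 A, F A & A p) \/ G0 p).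
  assert (two : forall p q, U p -> U q -> exists H, valid H /\ H p /\ H q /\ forall r, H r -> U r).
  { intros p q Hp Hq.
    assert (HA : forall A, F A -> forall r, A r \/ G0 r -> U r).
    { intros A FA r [Ar|Gr]; [left; exists A; auto | right; auto]. }
    destruct Hp as [[A FA Ap]|Gp]; destruct Hq as [[B FB Bq]|Gq].
    - destruct (Ht A B FA FB) as [AB|BA].
      + exists (fun r => B r \/ G0 r). refine (conj (HF _ FB) (conj _ (conj _ (HA _ FB)))); auto.
      + exists (fun r => A r \/ G0 r). refine (conj (HF _ FA) (conj _ (conj _ (HA _ FA)))); auto.
    - exists (fun r => A r \/ G0 r). refine (conj (HF _ FA) (conj _ (conj _ (HA _ FA)))); auto.
    - exists (fun r => B r \/ G0 r). refine (conj (HF _ FB) (conj _ (conj _ (HA _ FB)))); auto.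
    - exists G0. refine (conj valid_G0 (conj Gp (conj Gq _))). intros r Hr; right; auto. }
  unfold PZ. fold U. repeat split.
  - intros y a b Ha Hb. destruct (two _ _ Ha Hb) as [H [[h1 _] [H1 [H2 _]]]]. eauto.
  - intros y a z b Ha Hb. destruct (two _ _ Ha Hb) as [H [[_ [h2 _]] [H1 [H2 H3]]]]. eauto.
  - intros y a t Ha. destruct (two _ _ Ha Ha) as [H [[_ [_ [h3 _]]] [H1 [H2 H3]]]]. eauto.
  - intros y a Ha. destruct (two _ _ Ha Ha) as [H [[_ [_ [_ [h4 _]]]] [H1 [H2 H3]]]]. eauto.
  - right. apply valid_G0.
Qed.

Lemma hb_max : exists M : X * R -> Prop, valid M /\ (forall p, G0 p -> M p) /\
   forall B, (forall p, M p -> B p) -> valid B -> forall p, B p -> M p.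
Proof.
  destruct (zorn_sets _ PZ PZ_chain) as [M [PM HM]].
  assert (G0M : forall p, G0 p -> M p).
  { intros p Gp. apply (HM (fun r => M r \/ G0 r)); auto.
    unfold PZ. eapply valid_ext; [|exact PM]. intro r; tauto. }
  exists M. split; [|split; auto].
  - eapply valid_ext; [|exact PM]. intro r; split; [intros [|]; auto|auto].
  - intros B MB VB. apply HM; auto. unfold PZ. eapply valid_ext; [|exact VB].
    intro r; split; auto. intros [|]; auto.
Qed.

Lemma hb_ext (M : X * R -> Prop) (VM : valid M) (z : X) (Hz : forall a, ~ M (z, a)) :
  exists E : X * R -> Prop, valid E /\ (forall p, M p -> E p) /\ exists c, E (z, c).
Proof.
  destruct VM as [m1 [m2 [m3 [m4 m5]]]].
  set (S := fun r => exists w g, M (w, g) /\ r = g - vnorm (vadd w (vopp z))).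
  assert (key : forall w g w' g', M (w, g) -> M (w', g') ->
             g - vnorm (vadd w (vopp z)) <= vnorm (vadd w' z) - g').
  { intros w g w' g' Hw Hw'. pose proof (m4 _ _ (m2 _ _ _ _ Hw Hw')).
    assert (E : vadd w w' = vadd (vadd w (vopp z)) (vadd w' z)).
    { rewrite vACA, vNl, v0r; auto. }
    pose proof (nT _ X HN (vadd w (vopp z)) (vadd w' z)). rewrite <- E in H0. lra. }
  assert (Sb : bound S).
  { exists (vnorm (vadd (vzero X) z) - 0). intros r [w [g [Hw ->]]]. apply key; auto. }
  assert (Sne : exists r, S r). { exists (0 - vnorm (vadd (vzero X) (vopp z))). exists (vzero X), 0; auto. }
  destruct (completeness S Sb Sne) as [c [cub club]].
  assert (cl : forall w g, M (w, g) -> g - vnorm (vadd w (vopp z)) <= c).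
  { intros w g Hw. apply cub. exists w, g; auto. }
  assert (cu : forall w g, M (w, g) -> c <= vnorm (vadd w z) - g).
  { intros w g Hw. apply club. intros r [w' [g' [Hw' ->]]]. apply key; auto. }
  clear S Sb Sne cub club key.
  set (E := fun p => exists y g t, M (y, g) /\ p = (vadd y (rs t z), g + t * c)).
  exists E. split; [|split].
  - repeat split.
    + intros y a b [y1 [g1 [t1 [H1 E1]]]] [y2 [g2 [t2 [H2 E2]]]].
      injection E1 as E1a E1b. injection E2 as E2a E2b. subst a b.
      destruct (Req_dec t1 t2) as [Et|Nt].
      * subst t2. rewrite E1a in E2a. assert (y1 = y2).
        { apply (vcancel _ X HV (rs t1 z)). rewrite !(vC _ X HV (rs t1 z)). auto. }
        subst y2. rewrite (m1 _ _ _ H1 H2). reflexivity.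
      * exfalso. apply (Hz ((/ (t2 - t1)) * (g1 + (-1) * g2))).
        replace z with (rs (/ (t2 - t1)) (vadd y1 (rs (-1) y2))).
        { apply m3. apply m2; auto. }
        rewrite rs_m1.
        assert (Ed : vadd y1 (vopp y2) = rs (t2 - t1) z).
        { apply (vcancel _ X HV (rs t1 z)). rewrite (vC _ X HV (rs t1 z) (vadd y1 (vopp y2))).
          rewrite <- (vA _ X HV y1), (vC _ X HV (vopp y2)), (vA _ X HV y1), <- E1a, E2a.
          rewrite <- (vA _ X HV y2), (vC _ X HV y2), <- (vA _ X HV), vNl, v0r by auto.
          rewrite <- rs_addl. f_equal. ring. }
        rewrite Ed, rs_mul. replace (/ (t2 - t1) * (t2 - t1)) with 1 by (field; lra). apply rs_1.
    + intros y a w b [y1 [g1 [t1 [H1 E1]]]] [y2 [g2 [t2 [H2 E2]]]].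
      injection E1 as -> ->. injection E2 as -> ->.
      exists (vadd y1 y2), (g1 + g2), (t1 + t2). split; auto.
      f_equal; [|ring]. rewrite rs_addl. apply vACA; auto.
    + intros y a s [y1 [g1 [t1 [H1 E1]]]]. injection E1 as -> ->.
      exists (rs s y1), (s * g1), (s * t1). split; auto.
      f_equal; [|ring]. rewrite rs_addr, rs_mul. reflexivity.
    + intros y a [y1 [g1 [t1 [H1 E1]]]]. injection E1 as -> ->.
      destruct (Rtotal_order t1 0) as [Tn|[T0|Tp]].
      * set (s := - t1). assert (Hs : s > 0) by (unfold s; lra).
        pose proof (cl _ _ (m3 _ _ (/ s) H1)) as C.
        assert (Eq : vnorm (vadd y1 (rs t1 z)) = s * vnorm (vadd (rs (/ s) y1) (vopp z))).
        { rewrite <- (Rabs_pos_eq s) at 1 by lra. rewrite <- rs_norm. f_equal.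
          rewrite rs_addr, rs_mul, rs_vopp, <- rs_opp. replace (s * / s) with 1 by (field; lra).
          rewrite rs_1. unfold s. rewrite Ropp_involutive. reflexivity. }
        rewrite Eq. assert (s * (/ s * g1 - vnorm (vadd (rs (/ s) y1) (vopp z))) <= s * c)
          by (apply Rmult_le_compat_l; lra).
        replace (s * (/ s * g1 - vnorm (vadd (rs (/ s) y1) (vopp z)))) with
          (g1 - s * vnorm (vadd (rs (/ s) y1) (vopp z))) in H by (field; lra).
        unfold s in *. lra.
      * subst t1. rewrite rs_0, v0r by auto. replace (g1 + 0 * c) with g1 by ring. auto.
      * pose proof (cu _ _ (m3 _ _ (/ t1) H1)) as C.
        assert (Eq : vnorm (vadd y1 (rs t1 z)) = t1 * vnorm (vadd (rs (/ t1) y1) z)).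
        { rewrite <- (Rabs_pos_eq t1) at 2 by lra. rewrite <- rs_norm. f_equal.
          rewrite rs_addr, rs_mul. replace (t1 * / t1) with 1 by (field; lra).
          rewrite rs_1. reflexivity. }
        rewrite Eq. assert (t1 * c <= t1 * (vnorm (vadd (rs (/ t1) y1) z) - / t1 * g1))
          by (apply Rmult_le_compat_l; lra).
        replace (t1 * (vnorm (vadd (rs (/ t1) y1) z) - / t1 * g1)) with
          (t1 * vnorm (vadd (rs (/ t1) y1) z) - g1) in H by (field; lra). lra.
    + exists (vzero X), 0, 0. split; auto. rewrite rs_0, v0r by auto. f_equal; ring.
  - intros [y g] H. exists y, g, 0. split; auto. rewrite rs_0, v0r by auto. f_equal; ring.
  - exists c. exists (vzero X), 0, 1. split; auto. rewrite rs_1, v0l by auto. f_equal; ring.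
Qed.

Lemma hb_real : exists f : X -> R,
  (forall x y, f (vadd x y) = f x + f y) /\ (forall t x, f (rs t x) = t * f x) /\
  (forall x, Rabs (f x) <= vnorm x) /\ f x0 = vnorm x0.
Proof.
  destruct hb_max as [M [VM [G0M HM]]].
  assert (tot : forall y, exists a, M (y, a)).
  { intro y. apply NNPP; intro N. destruct (hb_ext M VM y) as [E [VE [ME [c Ec]]]].
    { intros a Ha. apply N. eauto. }
    apply N. exists c. apply (HM E); auto. }
  destruct VM as [m1 [m2 [m3 [m4 m5]]]].
  set (f := fun y => proj1_sig (constructive_indefinite_description _ (tot y))).
  assert (Hf : forall y, M (y, f y)).
  { intro y. unfold f. destruct constructive_indefinite_description; auto. }
  assert (fe : forall y a, M (y, a) -> f y = a). { intros y a H. eauto. }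
  exists f. split; [|split; [|split]].
  - intros x y. apply fe. apply m2; auto.
  - intros t x. apply fe. apply m3; auto.
  - intro x. unfold Rabs. destruct Rcase_abs.
    + pose proof (m4 _ _ (m3 _ _ (-1) (Hf x))). rewrite rs_m1, nopp in H by auto. lra.
    + apply m4; auto.
  - apply fe. assert (G0 (rs 1 x0, 1 * vnorm x0)) by (exists 1; reflexivity).
    rewrite rs_1, Rmult_1_l in H. apply G0M; auto.
Qed.

End HB.

Lemma cabs_le a b : cabs (Cplx a b) <= Rabs a + Rabs b.
Proof.
  unfold cabs; simpl. rewrite <- (sqrt_Rsqr (Rabs a + Rabs b)) by (pose proof (Rabs_pos a); pose proof (Rabs_pos b); lra).
  apply sqrt_le_1_alt. unfold Rsqr.
  assert (a * a = Rabs a * Rabs a) by (unfold Rabs; destruct Rcase_abs; ring).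
  assert (b * b = Rabs b * Rabs b) by (unfold Rabs; destruct Rcase_abs; ring).
  pose proof (Rabs_pos a); pose proof (Rabs_pos b). nra.
Qed.

Lemma hb_k (k : field_kind) (X : NormedSpace k) (HV : is_vector_space X) (HN : is_norm X)
  (x0 : X) (Hx0 : x0 <> vzero X) :
  exists phi, continuous_linear_functional X phi /\ kabs k (phi x0) > 0.
Proof.
  pose proof (n_pos_of_neq _ X HV HN x0 Hx0) as Hp.
  destruct (hb_real k X HV HN x0 Hx0) as [f [fa [fs [fb fx]]]].
  assert (fopp : forall x, f (vopp x) = - f x).
  { intro x. rewrite <- (rs_m1 k X HV), fs. ring. }
  assert (fsub : forall x y, f (vadd y (vopp x)) = f y - f x).
  { intros x y. rewrite fa, fopp. ring. }
  destruct k.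
  - exists f. split; [split; [|split]|].
    + exact fa.
    + intros a x. apply (fs a x).
    + intros x eps He. exists eps. split; auto. intros y Hy. simpl.
      pose proof (fb (vadd y (vopp x))). rewrite fsub in H. unfold Rminus in H. lra.
    + simpl. rewrite fx. rewrite Rabs_pos_eq; lra.
  - set (i := (Cplx 0 1 : scal ComplexField)).
    assert (dec : forall p q (y : X), vscal (Cplx p q : scal ComplexField) y = vadd (rs _ X p y) (rs _ X q (vscal i y))).
    { intros p q y. unfold rs. rewrite (vsM _ X HV), <- (vsDl _ X HV). f_equal.
      simpl. unfold cadd, cmul, i; simpl. apply cplx_eq; ring. }
    assert (fsc : forall p q (y : X), f (vscal (Cplx p q : scal ComplexField) y) = p * f y + q * f (vscal i y)).
    { intros p q y. rewrite dec, fa, !fs. reflexivity. }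
    exists (fun y => Cplx (f y) (- f (vscal i y))). split; [split; [|split]|].
    + intros x y. simpl. rewrite (vsDr _ X HV), !fa. unfold cadd; simpl. apply cplx_eq; ring.
    + intros [p q] x. simpl. rewrite (vsM _ X HV).
      replace (kmul ComplexField i (Cplx p q : scal ComplexField)) with (Cplx (- q) p : scal ComplexField) by (simpl; unfold cmul, i; simpl; apply cplx_eq; ring).
      rewrite !fsc. unfold cmul; simpl. apply cplx_eq; ring.
    + intros x eps He. exists (eps / 2). split; [lra|]. intros y Hy. simpl.
      eapply Rle_lt_trans; [apply cabs_le|]. simpl.
      pose proof (fb (vadd y (vopp x))) as B1. rewrite fsub in B1.
      pose proof (fb (vscal i (vadd y (vopp x)))) as B2.
      rewrite (nZ _ X HN) in B2.
      replace (kabs ComplexField i) with 1 in B2.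
      2:{ simpl. unfold cabs, i; simpl. replace (0 * 0 + 1 * 1) with 1 by ring. symmetry; apply sqrt_1. }
      rewrite (vsDr _ X HV), (vscal_opp _ X HV), fsub in B2.
      replace (f y + - f x) with (f y - f x) by ring.
      replace (- f (vscal i y) + - - f (vscal i x)) with (- (f (vscal i y) - f (vscal i x))) by ring.
      rewrite Rabs_Ropp. lra.
    + simpl. eapply Rlt_le_trans; [|apply cabs_re]. rewrite fx, Rabs_pos_eq; lra.
Qed.

Section Hamel.
Variable k : field_kind.
Variable V : NormedSpace k.
Hypothesis HV : is_vector_space V.

Notation lc := (lincomb (vzero V) vadd vscal).

Lemma lc_nil : lc nil = vzero V.
Proof. reflexivity. Qed.
Lemma lc_cons p l : lc (p :: l) = vadd (vscal (fst p) (snd p)) (lc l).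
Proof. reflexivity. Qed.

Definition cdec (x y : V) : bool := if excluded_middle_informative (x = y) then true else false.
Lemma cdec_spec x y : cdec x y = true <-> x = y.
Proof. unfold cdec; destruct excluded_middle_informative; split; congruence. Qed.

Lemma lc_split (f : scal k * V -> bool) l :
  lc l = vadd (lc (filter f l)) (lc (filter (fun p => negb (f p)) l)).
Proof.
  induction l as [|p l IH]; simpl.
  - rewrite (v0r _ V HV). reflexivity.
  - destruct (f p); simpl; rewrite IH.
    + apply vA; auto.
    + rewrite (vA _ V HV), (vC _ V HV (vscal _ _)), <- (vA _ V HV). reflexivity.
Qed.

Lemma lc_scal a l : vscal a (lc l) = lc (map (fun p => (kmul k a (fst p), snd p)) l).
Proof.
  induction l as [|p l IH]; simpl.
  - apply vsv0; auto.
  - rewrite (vsDr _ V HV), IH, (vsM _ V HV). reflexivity.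
Qed.

Lemma lc_allx x l : Forall (fun p => snd p = x) l ->
  lc l = vscal (fold_right (kadd k) (kzero k) (map fst l)) x.
Proof.
  induction l as [|p l IH]; simpl; intro H.
  - symmetry; apply vs0; auto.
  - inversion H; subst. rewrite IH by auto. rewrite (vsDl _ V HV). reflexivity.
Qed.

Lemma nodup_map_filter {A B} (g : A -> B) (f : A -> bool) l :
  NoDup (map g l) -> NoDup (map g (filter f l)).
Proof.
  induction l as [|a l IH]; simpl; intro H; auto.
  inversion H; subst. destruct (f a); simpl; auto.
  constructor; auto. intro Hin. apply H2. apply in_map_iff in Hin. destruct Hin as [b [E Hb]].
  apply filter_In in Hb. apply in_map_iff. exists b; split; tauto.
Qed.

Lemma nodup_allx x (l : list (scal k * V)) : NoDup (map snd l) -> Forall (fun p => snd p = x) l ->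
  l = nil \/ exists p, l = p :: nil.
Proof.
  intros N F. destruct l as [|p [|q l]]; [left; auto|right; exists p; auto|].
  exfalso. inversion F; subst. inversion H2; subst. simpl in N. inversion N; subst.
  apply H4. simpl. left. congruence.
Qed.

Lemma indep_add (A : V -> Prop) (x : V) :
  lin_indep (vzero V) vadd vscal A -> ~ in_span (vzero V) vadd vscal A x ->
  lin_indep (vzero V) vadd vscal (fun y => A y \/ y = x).
Proof.
  intros IA NS l N F E.
  set (f := fun p : scal k * V => cdec (snd p) x).
  set (l2 := filter f l). set (l1 := filter (fun p => negb (f p)) l).
  assert (F1 : Forall (fun p => A (snd p)) l1).
  { apply Forall_forall. intros p Hp. unfold l1 in Hp. apply filter_In in Hp. destruct Hp as [Hp Hf].
    rewrite Forall_forall in F. destruct (F p Hp) as [|Ex]; auto.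
    unfold f in Hf. apply cdec_spec in Ex. rewrite Ex in Hf. discriminate. }
  assert (F2 : Forall (fun p => snd p = x) l2).
  { apply Forall_forall. intros p Hp. unfold l2 in Hp. apply filter_In in Hp. apply cdec_spec. apply Hp. }
  set (c := fold_right (kadd k) (kzero k) (map fst l2)).
  assert (E2 : vadd (vscal c x) (lc l1) = vzero V).
  { rewrite (lc_split f l) in E. fold l1 l2 in E. rewrite (lc_allx x l2 F2) in E. exact E. }
  assert (Hc : c = kzero k).
  { apply NNPP; intro Nc. destruct (kinv k c Nc) as [d Hd]. apply NS.
    exists (map (fun p => (kmul k (kmul k (kopp k (kone k)) d) (fst p), snd p)) l1). split.
    - rewrite Forall_forall in *. intros p Hp. apply in_map_iff in Hp. destruct Hp as [q [<- Hq]].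
      simpl. apply F1; auto.
    - rewrite <- lc_scal. rewrite <- (vsM _ V HV).
      assert (Ex : vscal c x = vopp (lc l1)) by (apply (vopp_unique _ V HV); rewrite (vC _ V HV); rewrite (vC _ V HV) in E2; rewrite (vC _ V HV); exact E2).
      rewrite <- (vopp_scal _ V HV), <- (vscal_opp _ V HV), <- Ex, (vsM _ V HV), Hd. symmetry. apply vs1; auto. }
  assert (Z1 : Forall (fun p => fst p = kzero k) l1).
  { apply IA; auto. unfold l1. apply nodup_map_filter; auto.
    rewrite Hc, (vs0 _ V HV), (v0l _ V HV) in E2. exact E2. }
  assert (Z2 : Forall (fun p => fst p = kzero k) l2).
  { destruct (nodup_allx x l2) as [->|[p Ep]]; auto. unfold l2; apply nodup_map_filter; auto.
    unfold c in Hc. rewrite Ep in Hc. simpl in Hc. rewrite Ep. constructor; auto.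
    rewrite <- Hc. symmetry; apply kadd_0r. }
  apply Forall_forall. intros p Hp. destruct (f p) eqn:Hf.
  - rewrite Forall_forall in Z2. apply Z2. unfold l2. apply filter_In; auto.
  - rewrite Forall_forall in Z1. apply Z1. unfold l1. apply filter_In; split; auto. rewrite Hf; auto.
Qed.

Lemma chain_list (F : (V -> Prop) -> Prop)
  (Ht : forall A B, F A -> F B -> (forall x, A x -> B x) \/ (forall x, B x -> A x))
  (l : list (scal k * V)) :
  Forall (fun p => exists2 A, F A & A (snd p)) l ->
  l = nil \/ exists2 A, F A & Forall (fun p => A (snd p)) l.
Proof.
  induction l as [|p l IH]; intro H; [left; auto|right].
  inversion H; subst. destruct H2 as [A1 FA1 HA1]. destruct (IH H3) as [->|[A2 FA2 HA2]].
  - exists A1; auto.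
  - destruct (Ht A1 A2 FA1 FA2) as [S|S].
    + exists A2; auto.
    + exists A1; auto. constructor; auto. eapply Forall_impl; [|exact HA2]. simpl; auto.
Qed.

Lemma hamel_exists (W : V -> Prop) :
  exists B, is_hamel_basis (vzero V) vadd vscal W B.
Proof.
  set (P := fun B : V -> Prop => (forall x, B x -> W x) /\ lin_indep (vzero V) vadd vscal B).
  destruct (zorn_sets V P) as [A [[AW IA] HA]].
  - intros F HF Ht. split.
    + intros x [A FA Ax]. apply (HF A FA); auto.
    + intros l N Fl E. destruct (chain_list F Ht l Fl) as [->|[A FA HA]]; auto.
      apply (HF A FA); auto.
  - exists A. split; [|split]; auto. intros x Wx. apply NNPP; intro NS.
    assert (Ax : A x).
    { apply (HA (fun y => A y \/ y = x)); auto. split.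
      - intros y [|<-]; auto.
      - apply indep_add; auto. }
    apply NS. exists ((kone k, x) :: nil). split.
    + constructor; auto.
    + simpl. rewrite (v0r _ V HV), (vs1 _ V HV). reflexivity.
Qed.

End Hamel.

Lemma exp_le' x y : x <= y -> exp x <= exp y.
Proof. intro H. destruct (Req_dec x y) as [->|N]; [lra|]. left. apply exp_increasing. lra. Qed.
Lemma ln_le' x y : 0 < x -> x <= y -> ln x <= ln y.
Proof. intros H1 H. destruct (Req_dec x y) as [->|N]; [lra|]. left. apply ln_increasing; lra. Qed.

Definition alpha (i : nat) : R := exp (- sqrt (ln (INR i + 1))).

Lemma ln_INR_nonneg i : 0 <= ln (INR i + 1).
Proof. rewrite <- ln_1. apply ln_le'; [lra|]. pose proof (pos_INR i); lra. Qed.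

Lemma alpha_0 : alpha 0 = 1.
Proof. unfold alpha. simpl. replace (0 + 1) with 1 by ring. rewrite ln_1, sqrt_0, Ropp_0. apply exp_0. Qed.
Lemma alpha_pos i : 0 < alpha i.
Proof. apply exp_pos. Qed.
Lemma alpha_le1 i : alpha i <= 1.
Proof. unfold alpha. apply Rle_trans with (exp 0); [apply exp_le'; pose proof (sqrt_pos (ln (INR i + 1))); lra | rewrite exp_0; lra]. Qed.
Lemma alpha_mono i i' : (i <= i')%nat -> alpha i' <= alpha i.
Proof.
  intro H. unfold alpha. apply exp_le'. apply Ropp_le_contravar. apply sqrt_le_1_alt.
  apply ln_le'. pose proof (pos_INR i); lra. apply le_INR in H. lra.
Qed.

Lemma big_index K : exists M : nat, K <= sqrt (ln (INR M + 1)).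
Proof.
  destruct (INR_unbounded (exp (K * K))) as [M HM]. exists M.
  destruct (Rle_dec K 0) as [Kn|Kp]. { pose proof (sqrt_pos (ln (INR M + 1))); lra. }
  rewrite <- (sqrt_Rsqr K) by lra. apply sqrt_le_1_alt. unfold Rsqr.
  rewrite <- (ln_exp (K * K)). apply ln_le'. apply exp_pos. lra.
Qed.

Lemma alpha_lim d : d > 0 -> exists I, forall i, (I <= i)%nat -> alpha i < d.
Proof.
  intro Hd. destruct (big_index (Rabs (ln d) + 1)) as [I HI]. exists I. intros i Hi.
  pose proof (alpha_mono _ _ Hi). unfold alpha at 2 in H.
  assert (exp (- sqrt (ln (INR I + 1))) < d).
  { rewrite <- (exp_ln d) by lra. apply exp_increasing.
    pose proof (Rle_abs (- ln d)). rewrite Rabs_Ropp in H0. lra. }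
  lra.
Qed.

Lemma sum_nonneg f N : (forall n, 0 <= f n) -> 0 <= sum_f_R0 f N.
Proof. intro H. induction N; simpl; auto. pose proof (H (S N)); lra. Qed.

Lemma sum_mono f N N' : (forall n, 0 <= f n) -> (N <= N')%nat -> sum_f_R0 f N <= sum_f_R0 f N'.
Proof.
  intros H L. induction L; [lra|]. simpl. pose proof (H (S m)); lra.
Qed.

Lemma sum_without f a N : (a <= N)%nat ->
  sum_f_R0 (fun n => if Nat.eq_dec n a then 0 else f n) N = sum_f_R0 f N - f a.
Proof.
  intro H. induction N.
  - assert (a = 0%nat) by lia. subst. simpl. destruct (Nat.eq_dec 0 0); [ring|congruence].
  - destruct (Nat.eq_dec a (S N)) as [->|Na].
    + rewrite !tech5. destruct (Nat.eq_dec (S N) (S N)); [|congruence].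
      assert (E : sum_f_R0 (fun n => if Nat.eq_dec n (S N) then 0 else f n) N = sum_f_R0 f N).
      { apply sum_eq. intros i Hi. destruct (Nat.eq_dec i (S N)); [lia|auto]. }
      rewrite E. ring.
    + rewrite !tech5. rewrite IHN by lia. destruct (Nat.eq_dec (S N) a); [lia|]. ring.
Qed.

Lemma subsum f g M N : (forall n, 0 <= f n) ->
  (forall i, (i <= M)%nat -> (g i <= N)%nat) ->
  (forall i i', (i <= M)%nat -> (i' <= M)%nat -> g i = g i' -> i = i') ->
  sum_f_R0 (fun i => f (g i)) M <= sum_f_R0 f N.
Proof.
  revert f. induction M; intros f Hf Hb Hi.
  - simpl. pose proof (sum_without f (g 0%nat) N (Hb 0%nat (le_n _))).
    pose proof (sum_nonneg (fun n => if Nat.eq_dec n (g 0%nat) then 0 else f n) N).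
    assert (0 <= sum_f_R0 (fun n => if Nat.eq_dec n (g 0%nat) then 0 else f n) N).
    { apply H0. intro n. destruct Nat.eq_dec; [lra|auto]. }
    lra.
  - set (f' := fun n => if Nat.eq_dec n (g (S M)) then 0 else f n).
    simpl. assert (E : sum_f_R0 (fun i => f (g i)) M = sum_f_R0 (fun i => f' (g i)) M).
    { apply sum_eq. intros i Hi'. unfold f'. destruct Nat.eq_dec; auto.
      assert (i = S M) by (apply Hi; auto; lia). lia. }
    rewrite E. pose proof (IHM f') as IH.
    assert (sum_f_R0 (fun i => f' (g i)) M <= sum_f_R0 f' N).
    { apply IH; auto. intro n; unfold f'; destruct Nat.eq_dec; auto; lra. }
    unfold f' in H at 2. rewrite sum_without in H by auto. lra.
Qed.

Lemma Un_cv_bound (s : nat -> R) l : (forall n m, (n <= m)%nat -> s n <= s m) ->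
  Un_cv s l -> forall N, s N <= l + 1.
Proof.
  intros Hm Hc N. destruct (Hc 1 ltac:(lra)) as [N0 HN]. specialize (HN (max N N0) ltac:(lia)).
  unfold R_dist in HN. pose proof (Hm N (max N N0) ltac:(lia)).
  pose proof (Rle_abs (s (max N N0) - l)). lra.
Qed.

Lemma growth p c B : p > 0 -> c > 0 -> exists M : nat,
  (INR M + 1) * Rpower (alpha M * c) p > B.
Proof.
  intros Hp Hc. set (B' := Rmax B 1).
  set (K := p + Rabs (p * ln c) + Rabs (ln B') + 1).
  destruct (big_index K) as [M HM]. exists M.
  set (L := ln (INR M + 1)). set (s := sqrt L).
  assert (HL : 0 <= L) by apply ln_INR_nonneg.
  assert (Hs2 : s * s = L) by (apply sqrt_sqrt; auto).
  assert (HK : K >= p + 1) by (unfold K; pose proof (Rabs_pos (p * ln c)); pose proof (Rabs_pos (ln B')); lra).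
  fold L s in HM.
  unfold Rpower. rewrite ln_mult by (auto using alpha_pos). unfold alpha. rewrite ln_exp. fold L s.
  rewrite <- (exp_ln (INR M + 1)) by (pose proof (pos_INR M); lra). fold L.
  rewrite <- exp_plus.
  assert (B <= B') by apply Rmax_l. assert (HB' : 0 < B') by (unfold B'; pose proof (Rmax_r B 1); lra).
  rewrite <- (exp_ln B') in H by auto.
  assert (ln B' < L + p * (- s + ln c)).
  { rewrite <- Hs2. pose proof (Rle_abs (- (p * ln c))). rewrite Rabs_Ropp in H0.
    pose proof (Rle_abs (ln B')).
    assert (s * s - p * s >= K * K - p * K) by nra.
    assert (K * K - p * K >= K - p) by nra.
    unfold K in *. nra. }
  pose proof (exp_increasing _ _ H0). lra.
Qed.

Lemma sig_eq_pi {A} (P : A -> Prop) x y (px : P x) (py : P y) : x = y -> exist P x px = exist P y py.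
Proof. intros ->. f_equal. apply proof_irrelevance. Qed.

Lemma NoDup_map_on {A B} (f : A -> B) (l : list A) :
  (forall x y, In x l -> In y l -> f x = f y -> x = y) -> NoDup l -> NoDup (map f l).
Proof.
  induction l as [|a l IH]; simpl; intros Hi N; constructor.
  - intro Hin. apply in_map_iff in Hin. destruct Hin as [b [E Hb]].
    inversion N; subst. apply H1. rewrite <- (Hi b a); auto.
  - apply IH; auto. inversion N; auto.
Qed.

Section Main.
Variable k : field_kind.
Variable X : NormedSpace k.
Hypothesis HV : is_vector_space X.
Hypothesis HN : is_norm X.

Definition Seq : NormedSpace k :=
  {| carrier := nat -> X; vzero := seq_zero X; vadd := seq_add; vopp := fun u n => vopp (u n);
     vscal := seq_scal; vnorm := fun _ => 0 |}.

Lemma Seq_vs : is_vector_space Seq.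
Proof.
  unfold is_vector_space; simpl; unfold seq_add, seq_scal, seq_zero.
  repeat split; intros; apply functional_extensionality; intro n.
  - apply vA; auto.
  - apply vC; auto.
  - apply v0r; auto.
  - apply vNr; auto.
  - apply vsM; auto.
  - apply vs1; auto.
  - apply vsDr; auto.
  - apply vsDl; auto.
Qed.

Definition T (u : nat -> X) : nat -> X :=
  fun m => vscal (kr k (alpha (fst (of_nat m)))) (u (snd (of_nat m))).
Definition Sinv (v : nat -> X) : nat -> X := fun j => v (to_nat (0%nat, j)).
Definition W (v : nat -> X) : Prop := exists u, in_c0 X u /\ v = T u.

Lemma ST u : Sinv (T u) = u.
Proof.
  apply functional_extensionality; intro j. unfold Sinv, T. rewrite cancel_of_to. simpl.
  rewrite alpha_0, kr_one. apply vs1; auto.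
Qed.

Lemma T_add u v : T (seq_add u v) = seq_add (T u) (T v).
Proof. apply functional_extensionality; intro m. unfold T, seq_add. apply vsDr; auto. Qed.
Lemma T_scal a u : T (seq_scal a u) = seq_scal a (T u).
Proof.
  apply functional_extensionality; intro m. unfold T, seq_scal. rewrite !(vsM _ X HV). f_equal. apply kmul_comm.
Qed.
Lemma T_zero : T (seq_zero X) = seq_zero X.
Proof. apply functional_extensionality; intro m. unfold T, seq_zero. apply vsv0; auto. Qed.

Lemma c0_zero : in_c0 X (seq_zero X).
Proof. intros eps He. exists 0%nat. intros. unfold seq_zero. rewrite (nzero _ X HV HN). lra. Qed.
Lemma c0_add u v : in_c0 X u -> in_c0 X v -> in_c0 X (seq_add u v).
Proof.
  intros Hu Hv eps He. destruct (Hu (eps/2) ltac:(lra)) as [N1 H1]. destruct (Hv (eps/2) ltac:(lra)) as [N2 H2].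
  exists (max N1 N2). intros n Hn. unfold seq_add. pose proof (nT _ X HN (u n) (v n)).
  specialize (H1 n ltac:(lia)). specialize (H2 n ltac:(lia)). lra.
Qed.
Lemma c0_scal a u : in_c0 X u -> in_c0 X (seq_scal a u).
Proof.
  intros Hu eps He. pose proof (kabs_nonneg k a).
  destruct (Hu (eps / (kabs k a + 1))) as [N HN'].
  { apply Rdiv_lt_0_compat; lra. }
  exists N. intros n Hn. unfold seq_scal. rewrite nZ; auto. specialize (HN' n Hn).
  pose proof (npos _ X HV HN (u n)).
  apply Rle_lt_trans with ((kabs k a + 1) * vnorm (u n)); [nra|].
  assert (HH : (kabs k a + 1) * vnorm (u n) < (kabs k a + 1) * (eps / (kabs k a + 1)))
    by (apply Rmult_lt_compat_l; lra).
  replace ((kabs k a + 1) * (eps / (kabs k a + 1))) with eps in HH by (field; lra). exact HH.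
Qed.

Lemma c0_bounded u : in_c0 X u -> exists M, M > 0 /\ forall j, vnorm (u j) <= M.
Proof.
  intro Hu. destruct (Hu 1 ltac:(lra)) as [N HN'].
  assert (F : forall N, exists M, forall j, (j < N)%nat -> vnorm (u j) <= M).
  { induction N0 as [|N0 [M HM]].
    - exists 0. intros; lia.
    - exists (Rmax M (vnorm (u N0))). intros j Hj. destruct (Nat.eq_dec j N0) as [->|Nj].
      + apply Rmax_r.
      + eapply Rle_trans; [apply HM; lia|apply Rmax_l]. }
  destruct (F N) as [M HM]. exists (Rmax M 1 + 1). split.
  - pose proof (Rmax_r M 1); lra.
  - intro j. destruct (Nat.lt_ge_cases j N) as [L|L].
    + pose proof (HM j L). pose proof (Rmax_l M 1). lra.
    + pose proof (HN' j L). pose proof (Rmax_r M 1). lra.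
Qed.

Lemma to_nat_bound i j I J : (i < I)%nat -> (j < J)%nat -> (to_nat (i, j) < J + (I + J) * (I + J + 1))%nat.
Proof.
  intros Hi Hj. pose proof (to_nat_spec i j). nia.
Qed.

Lemma T_c0 u : in_c0 X u -> in_c0 X (T u).
Proof.
  intros Hu eps He. destruct (c0_bounded u Hu) as [M [HM HMb]].
  destruct (alpha_lim (eps / M)) as [I HI]. { apply Rdiv_lt_0_compat; lra. }
  destruct (Hu eps He) as [J HJ].
  exists (J + (I + J) * (I + J + 1))%nat. intros m Hm. unfold T.
  destruct (of_nat m) as [i j] eqn:Em. simpl. rewrite nZ, kabs_kr, Rabs_pos_eq by (auto; left; apply alpha_pos).
  pose proof (npos _ X HV HN (u j)). pose proof (alpha_pos i). pose proof (alpha_le1 i).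
  destruct (Nat.lt_ge_cases i I) as [Li|Li].
  - destruct (Nat.lt_ge_cases j J) as [Lj|Lj].
    + exfalso. pose proof (to_nat_bound i j I J Li Lj). rewrite <- Em, cancel_to_of in H2. lia.
    + pose proof (HJ j Lj). nra.
  - pose proof (HI i Li). pose proof (HMb j).
    apply Rle_lt_trans with (alpha i * M); [nra|].
    apply Rmult_lt_compat_r with (r := M) in H2; auto.
    replace (eps / M * M) with eps in H2 by (field; lra). exact H2.
Qed.

Lemma S_c0 v : in_c0 X v -> in_c0 X (Sinv v).
Proof.
  intros Hv eps He. destruct (Hv eps He) as [N HN']. exists N. intros n Hn. unfold Sinv.
  apply HN'. pose proof (to_nat_non_decreasing 0 n). lia.
Qed.

Lemma W_closed : closed_subspace_c0 X W.
Proof.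
  split; [|split; [|split; [|split]]].
  - intros v [u [Hu ->]]. apply T_c0; auto.
  - exists (seq_zero X). split; [apply c0_zero|symmetry; apply T_zero].
  - intros v v' [u [Hu ->]] [u' [Hu' ->]]. exists (seq_add u u'). split; [apply c0_add; auto|symmetry; apply T_add].
  - intros a v [u [Hu ->]]. exists (seq_scal a u). split; [apply c0_scal; auto|symmetry; apply T_scal].
  - intros w v Hw Hv Hc. exists (Sinv v). split; [apply S_c0; auto|].
    apply functional_extensionality; intro m. apply (n_small_eq _ X HV HN). intros eps He.
    destruct (Hc (eps / 2) ltac:(lra)) as [N HN']. specialize (HN' N (le_n _)).
    destruct (Hw N) as [u [Hu Ew]].
    unfold T at 1, Sinv. destruct (of_nat m) as [i j] eqn:Em. cbn [fst snd].
    set (q := to_nat (0%nat, j)). set (a := kr k (alpha i)).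
    assert (E1 : w N m = vscal a (w N q)).
    { rewrite Ew. unfold T. rewrite Em. unfold q. rewrite cancel_of_to. simpl.
      rewrite alpha_0, kr_one, vs1; auto. }
    eapply Rle_trans; [apply (nsub_tri _ X HV HN _ (w N m))|].
    pose proof (HN' m) as H1. pose proof (HN' q) as H2.
    rewrite (nsub_sym _ X HV HN (v m)).
    rewrite E1 at 2. rewrite <- (vsub_scal _ X HV), nZ; auto.
    unfold a. rewrite kabs_kr, Rabs_pos_eq by (left; apply alpha_pos). pose proof (alpha_le1 i). pose proof (alpha_pos i).
    pose proof (npos _ X HV HN (vadd (w N q) (vopp (v q)))). nra.
Qed.

Lemma rpow_nonneg a p : 0 <= rpow a p.
Proof. unfold rpow. destruct Rle_dec; [lra|]. unfold Rpower. left; apply exp_pos. Qed.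

Lemma T_not_weak u : in_c0 X u -> T u <> seq_zero X ->
  ~ exists p, p > 0 /\ weakly_p_summable X p (T u).
Proof.
  intros Hu Hne [p [Hp Hw]].
  assert (Ex : exists m, T u m <> vzero X).
  { apply NNPP; intro N. apply Hne. apply functional_extensionality; intro m.
    apply NNPP; intro N2. apply N. exists m; auto. }
  destruct Ex as [m Hm]. set (j := snd (of_nat m)).
  assert (Hx : u j <> vzero X).
  { intro E. apply Hm. unfold T. fold j. rewrite E. apply vsv0; auto. }
  destruct (hb_k k X HV HN (u j) Hx) as [phi [Hphi Hc]].
  destruct (Hw phi Hphi) as [l Hl].
  destruct Hphi as [pa [ps pc]].
  set (c := kabs k (phi (u j))) in *.
  set (t := fun n => rpow (kabs k (phi (T u n))) p) in *.
  assert (tn : forall n, 0 <= t n) by (intro; apply rpow_nonneg).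
  assert (Hb : forall N, sum_f_R0 t N <= l + 1).
  { apply Un_cv_bound; auto. intros; apply sum_mono; auto. }
  assert (tv : forall i, t (to_nat (i, j)) = Rpower (alpha i * c) p).
  { intro i. unfold t, T. rewrite cancel_of_to. simpl. rewrite ps, kabs_mul, kabs_kr.
    rewrite Rabs_pos_eq by (left; apply alpha_pos). fold c. unfold rpow.
    destruct Rle_dec as [r|r]; auto. pose proof (alpha_pos i). exfalso. nra. }
  destruct (growth p c (l + 1) Hp Hc) as [M HM].
  pose proof (subsum t (fun i => to_nat (i, j)) M (to_nat (M, j)) tn) as Hs.
  assert (Hs' : sum_f_R0 (fun i => t (to_nat (i, j))) M <= sum_f_R0 t (to_nat (M, j))).
  { apply Hs.
    - intros i Hi. pose proof (to_nat_spec i j). pose proof (to_nat_spec M j). nia.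
    - intros i i' _ _ E. apply to_nat_inj in E. congruence. }
  assert (HL : sum_f_R0 (fun _ => Rpower (alpha M * c) p) M <= sum_f_R0 (fun i => t (to_nat (i, j))) M).
  { apply sum_Rle. intros i Hi. rewrite tv. apply Rle_Rpower_l; [lra|].
    pose proof (alpha_pos M). pose proof (alpha_mono i M Hi). split; nra. }
  rewrite sum_cte, S_INR in HL. specialize (Hb (to_nat (M, j))). lra.
Qed.

Notation slc := (lincomb (seq_zero X) seq_add seq_scal).

Lemma T_lc l : T (slc l) = slc (map (fun p => (fst p, T (snd p))) l).
Proof.
  induction l as [|p l IH]; simpl; [apply T_zero|]. rewrite T_add, T_scal, IH. reflexivity.
Qed.
Lemma S_lc l : Sinv (slc l) = slc (map (fun p => (fst p, Sinv (snd p))) l).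
Proof.
  induction l as [|p l IH]; simpl; [reflexivity|]. rewrite <- IH. reflexivity.
Qed.

Lemma W_TS v : W v -> T (Sinv v) = v.
Proof. intros [u [_ ->]]. rewrite ST. reflexivity. Qed.

Lemma same_dim_W : same_dim (seq_zero X) seq_add seq_scal W (in_c0 X).
Proof.
  destruct (hamel_exists k Seq Seq_vs (in_c0 X)) as [B2 [HB2a [HB2b HB2c]]].
  simpl in HB2a, HB2b, HB2c.
  set (B1 := fun v => exists b, B2 b /\ v = T b).
  assert (B1S : forall x, B1 x -> B2 (Sinv x)).
  { intros x [b [Hb ->]]. rewrite ST. auto. }
  assert (B1W : forall x, B1 x -> W x).
  { intros x [b [Hb ->]]. exists b; auto. }
  exists B1, B2. split; [|split].
  - split; [|split].
    + auto.
    + intros l N F E.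
      set (l' := map (fun p => (fst p, Sinv (snd p))) l).
      assert (Z : Forall (fun p => fst p = kzero k) l').
      { apply HB2b.
        - unfold l'. rewrite map_map. simpl. rewrite <- (map_map snd Sinv).
          apply NoDup_map_on; auto. intros x y Hx Hy Exy.
          rewrite Forall_forall in F. apply in_map_iff in Hx, Hy.
          destruct Hx as [px [<- Hpx]]. destruct Hy as [py [<- Hpy]].
          rewrite <- (W_TS (snd px)), <- (W_TS (snd py)), Exy; auto.
        - unfold l'. rewrite Forall_forall in *. intros p Hp. apply in_map_iff in Hp.
          destruct Hp as [q [<- Hq]]. simpl. apply B1S. apply F; auto.
        - unfold l'. rewrite <- S_lc. simpl in E. rewrite E. reflexivity. }
      unfold l' in Z. rewrite Forall_map in Z. exact Z.
    + intros x [u [Hu ->]]. destruct (HB2c u Hu) as [l [F E]].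
      exists (map (fun p => (fst p, T (snd p))) l). split.
      * rewrite Forall_forall in *. intros p Hp. apply in_map_iff in Hp.
        destruct Hp as [q [<- Hq]]. simpl. exists (snd q); auto.
      * rewrite <- T_lc. f_equal. exact E.
  - split; [|split]; auto.
  - exists (fun a => exist B2 (Sinv (proj1_sig a)) (B1S _ (proj2_sig a))). split.
    + intros [a Ha] [b Hb] E. apply (f_equal (@proj1_sig _ _)) in E. simpl in E.
      apply sig_eq_pi. rewrite <- (W_TS a), <- (W_TS b), E; auto.
    + intros [b Hb]. assert (Hb1 : B1 (T b)) by (exists b; auto).
      exists (exist B1 (T b) Hb1). apply sig_eq_pi. simpl. apply ST.
Qed.

End Main.

Theorem corollary1 (k : field_kind) (X : NormedSpace k)
  (HX : is_banach X) (Hinf : infinite_dimensional X) :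
  maximal_spaceable_c0 X (c0_minus_weak X).
Proof.
  destruct HX as [HV [HN _]].
  exists (W k X). split; [apply W_closed; auto|split].
  - intros v [u [Hu ->]]. destruct (classic (T k X u = seq_zero X)) as [E|E].
    + right; auto.
    + left. split; [apply T_c0; auto|]. apply T_not_weak; auto.
  - apply same_dim_W; auto.
Qed.
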